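(* Let $M\ge1$ and $0\le j<M$. Let $\mathbf k^j=(k^j_0,\dots,k^j_{M-1})$ satisfy $k^j_i=\infty$ for $i<j$, with $k^j_j\le k^j_{j+1}\le\dots\le k^j_{M-1}$ positive integers. Define $\mathbf k^{j+1}$ by $$k^{j+1}_i=\begin{cases}k^j_i-\left\lceil k^j_i/k^j_j\right\rceil, & i>j,\\ \infty, & i\le j.\end{cases}$$ If $\mathbf k^{j+1}$ is schedulable, then $\mathbf k^j$ is schedulable. Moreover, there exists a schedule satisfying $\mathbf k^j$ in which task $v_j$ is scheduled exactly every $k^j_j$ slots.
   Context: Pinwheel scheduling: given a vector $\mathbf k=(k_0,\dots,k_{M-1})$ with entries in $\mathbb Z_{>0}\cup\{\infty\}$, a schedule is an assignment of at most one task from $\{v_0,\dots,v_{M-1}\}$ to each time slot. The schedule satisfies $\mathbf k$ if, for every $i$ with $k_i<\infty$, the gap between consecutive occurrences of $v_i$ (and the time until its first occurrence) is at most $k_i$. Equivalently, every window of $k_i$ consecutive slots contains $v_i$. An entry $k_i=\infty$ means task $v_i$ is absent and imposes no constraint. The vector $\mathbf k$ is schedulable if such a schedule exists. *)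

(* Defs.v *)
From mathcomp Require Import all_boot.
Set Implicit Arguments. Unset Strict Implicit. Unset Printing Implicit Defensive.

(* A pinwheel vector on tasks v_0..v_{M-1}: [None] encodes the entry infinity. *)
Definition kvec (M : nat) := 'I_M -> option nat.

Definition schedule (M : nat) := nat -> option 'I_M.

Definition satisfies (M : nat) (S : schedule M) (k : kvec M) : Prop :=
  forall (i : 'I_M) (n : nat), k i = Some n ->
    forall t : nat, exists s : nat, t <= s < t + n /\ S s = Some i.

Definition schedulable (M : nat) (k : kvec M) : Prop :=
  exists S : schedule M, satisfies S k.

Definition ceil_div (a b : nat) : nat := (a + b.-1) %/ b.

Definition kvec_j (M : nat) (j : 'I_M) (f : 'I_M -> nat) : kvec M :=
  fun i => if i < j then None else Some (f i).

Definition kvec_next (M : nat) (j : 'I_M) (f : 'I_M -> nat) : kvec M :=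
  fun i => if j < i then Some (f i - ceil_div (f i) (f j)) else None.

(* Main.v *)
Require Import Defs.
From mathcomp Require Import all_boot zify.

Lemma fdiv p t n : 0 < p -> (t+n) %/ p - t %/ p <= ceil_div n p.
Proof.
move=> hp; rewrite /ceil_div.
have e1 := divn_eq t p; have e2 := divn_eq (t+n) p; have e3 := divn_eq (n + p.-1) p.
have h1 := ltn_pmod t hp; have h2 := ltn_pmod (t+n) hp; have h3 := ltn_pmod (n+p.-1) hp.
move: e1 e2 e3 h1 h2 h3.
move: (t %/ p) (t %% p) ((t+n) %/ p) ((t+n) %% p) ((n+p.-1) %/ p) ((n+p.-1) %% p) => q1 r1 q2 r2 q3 r3.
move=> e1 e2 e3 h1 h2 h3.
suff : q2 < q1 + q3 + 1 by lia.
rewrite -(ltn_pmul2r hp). nia.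
Qed.

Lemma divS p x : 0 < p -> (x.+1 - x.+1 %/ p) = (x - x %/ p) + (x %% p != p.-1).
Proof.
move=> hp.
have e1 := divn_eq x p; have e2 := divn_eq x.+1 p.
have h1 := ltn_pmod x hp; have h2 := ltn_pmod x.+1 hp.
have l1 := leq_div x p.
have l2 := leq_div x.+1 p.
move: e1 e2 h1 h2 l1 l2.
move: (x %/ p) (x %% p) (x.+1 %/ p) (x.+1 %% p) => q1 r1 q2 r2.
move=> e1 e2 h1 h2 l1 l2.
have [eqq|neq] := eqVneq r1 p.-1.
- have : q2 = q1 + 1.
    apply/eqP; rewrite eqn_leq; apply/andP; split.
    + rewrite -ltnS -(ltn_pmul2r hp). nia.
    + rewrite addn1 -(ltn_pmul2r hp). nia.
  lia.
- have : q2 = q1.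
    apply/eqP; rewrite eqn_leq; apply/andP; split.
    + rewrite -ltnS -(ltn_pmul2r hp). nia.
    + rewrite -ltnS -(ltn_pmul2r hp) mulSn. nia.
  lia.
Qed.

Lemma ivt (g : nat -> nat) (hg : forall x, g x.+1 = g x \/ g x.+1 = (g x).+1) t n u :
  g t <= u < g (t + n) -> exists s, t <= s < t + n /\ g s = u /\ g s.+1 = u.+1.
Proof.
elim: n => [|n IH]; first by rewrite addn0; lia.
move=> /andP[h1 h2].
case: (ltnP u (g (t + n))) => h3.
  have [s [hs1 hs2]] := IH (introT andP (conj h1 h3)).
  by exists s; split => //; lia.
exists (t + n); rewrite addnS in h2 *.
have := hg (t + n); lia.
Qed.

Theorem lemma4 (M : nat) (j : 'I_M) (f : 'I_M -> nat)
  (hpos : forall i : 'I_M, j <= i -> 0 < f i)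
  (hmono : forall i i' : 'I_M, j <= i -> i <= i' -> f i <= f i')
  (hsched : schedulable (kvec_next j f)) :
  schedulable (kvec_j j f) /\
  exists S : schedule M,
    satisfies S (kvec_j j f) /\
    exists a : nat, a < f j /\
      forall t : nat, S t = Some j <-> t %% f j = a.
Proof.
have hp : 0 < f j := hpos j (leqnn _).
set p := f j in hp *.
case: hsched => S' HS'.
pose m x := x - x %/ p.
pose S : schedule M := fun t => if t %% p == p.-1 then Some j else
  match S' (m t) with Some i => if j < i then Some i else None | None => None end.
suff HS : satisfies S (kvec_j j f).
  split; first by exists S.
  exists S; split => //; exists p.-1; split; first by rewrite prednK.
  move=> t; rewrite /S; case: eqP => [-> //|ne]; split => [|H]; last by case: ne.
  case: (S' (m t)) => // i; case: ifP => // hji [] ei.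
  by rewrite ei ltnn in hji.
move=> i n; rewrite /kvec_j; case: ifP => // hij [] <- t.
have [eij|nij] := eqVneq i j.
  subst i; exists (t %/ p * p + p.-1).
  rewrite /S; split; last by rewrite modnMDl modn_small ?eqxx // prednK.
  have e1 := divn_eq t p; have h1 := ltn_pmod t hp. rewrite -/p. lia.
have hji : j < i by rewrite ltn_neqAle eq_sym nij leqNgt hij.
have := HS' i _ _ (m t).
rewrite /kvec_next hji => /(_ _ erefl) [u [hu1 hu2]].
have hm : forall x, m x.+1 = m x \/ m x.+1 = (m x).+1.
  by move=> x; rewrite /m divS //; case: (_ != _); [right; rewrite addn1|left; rewrite addn0].
have hc := @fdiv p t (f i) hp.
have hmono' : m t <= m (t + f i).
  elim: (f i) => [|b IH]; first by rewrite addn0.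
  rewrite addnS; have := hm (t + b); lia.
have hh : m t <= u < m (t + f i).
  apply/andP; split; first by case/andP: hu1.
  have := leq_div t p; have := leq_div (t + f i) p.
  have := leq_div2r p (leq_addr (f i) t).
  rewrite /m in hu1 hmono' *. rewrite -/p in hu1. lia.
have [s [hs1 [hs2 hs3]]] := @ivt m hm t (f i) u hh.
exists s; split => //.
move: hs3; rewrite /m divS // -/(m s) hs2 /S hs2 hu2 hji.
by case: (s %% p == p.-1) => //=; lia.
Qed.
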